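(* Let $d>0$, and for each integer $M>d$ let $\tilde{\mathcal D}_M$ be the scaled mean-field node-based function (with $p=d/M$) defined in the context. Then for every integer $N>d$ and all integers $N_1,N_2\ge N$, $$\sup_{(\alpha,\beta)\in[0,1)^2}\bigl|\tilde{\mathcal D}_{N_1}(\alpha,\beta)-\tilde{\mathcal D}_{N_2}(\alpha,\beta)\bigr|\le \frac{16d^2}{N}e^{8d}.$$
   Context: Mean-field node-based recursion: fix $M$ and $p\in(0,1]$. For $i,j\in\{1,\dots,M\}$ define $D_M(i,j)$ and $S_M(i,j)$ jointly by $S_M(i,j)=1-\sum_{k=1}^{j-1}D_M(i,k)$, $D_M(i,i)=0$, and $D_M(i,j)=p\,S_M(i,j)\,S_M(j,i)$ for $i\ne j$ (well defined by induction on $i+j$). For $\alpha\in[0,1)$ write $i_M(\alpha)=\lfloor M\alpha\rfloor+1$. The scaled function is $\tilde{\mathcal D}_M(\alpha,\beta)=M\,D_M(i_M(\alpha),i_M(\beta))$ if $\lfloor M\alpha\rfloor\neq\lfloor M\beta\rfloor$, and $\tilde{\mathcal D}_M(\alpha,\beta)=M p\,S_M(i_M(\alpha),i_M(\alpha))^2$ otherwise, with $p=d/M$. *)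

(* Defs.v *)
From Stdlib Require Import Reals ZArith Arith.
Open Scope R_scope.

Fixpoint sum_1_to (f : nat -> R) (n : nat) : R :=
  match n with
  | O => 0
  | S m => sum_1_to f m + f (S m)
  end.

(* Fuel-indexed version of the joint recursion
     S(i,j) = 1 - sum_{k=1}^{j-1} D(i,k),
     D(i,i) = 0,  D(i,j) = p S(i,j) S(j,i)  (i <> j).
   Each recursive call strictly decreases i+j, and all calls bottom out at
   D(k,k)=0 or empty sums, so fuel i+j is always sufficient. *)
Fixpoint D_fuel (fuel : nat) (p : R) (i j : nat) : R :=
  match fuel with
  | O => 0
  | S f =>
      if Nat.eqb i j then 0
      else p * (1 - sum_1_to (fun k => D_fuel f p i k) (j - 1))
             * (1 - sum_1_to (fun k => D_fuel f p j k) (i - 1))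
  end.

(* D_M(i,j) with parameter p (D_M depends on M only through p). *)
Definition Dnode (p : R) (i j : nat) : R := D_fuel (i + j) p i j.

Definition Snode (p : R) (i j : nat) : R :=
  1 - sum_1_to (fun k => Dnode p i k) (j - 1).

Definition floorZ (x : R) : Z := Int_part x.

Definition iM (M : nat) (alpha : R) : nat :=
  (Z.to_nat (floorZ (INR M * alpha)) + 1)%nat.

Definition Dscaled (d : R) (M : nat) (alpha beta : R) : R :=
  let p := d / INR M in
  if Z.eq_dec (floorZ (INR M * alpha)) (floorZ (INR M * beta))
  then INR M * p * (Snode p (iM M alpha) (iM M alpha)) ^ 2
  else INR M * Dnode p (iM M alpha) (iM M beta).

(* Main.v *)
Require Import Defs.
From Stdlib Require Import Reals ZArith Arith Lra Lia Psatz.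
Open Scope R_scope.

Fixpoint sumN (f : nat -> R) (n : nat) : R :=
  match n with O => 0 | S m => sumN f m + f m end.

Lemma sum_1_to_sumN f n : sum_1_to f n = sumN (fun k => f (S k)) n.
Proof. induction n; simpl; [reflexivity| rewrite IHn; reflexivity]. Qed.

Lemma sum_1_to_ext f g n : (forall k, (1 <= k <= n)%nat -> f k = g k) ->
  sum_1_to f n = sum_1_to g n.
Proof. induction n; intros H; simpl; [reflexivity|].
  rewrite IHn by (intros; apply H; lia). rewrite H by lia; reflexivity. Qed.

Lemma sumN_ext f g n : (forall k, (k < n)%nat -> f k = g k) -> sumN f n = sumN g n.
Proof. induction n; intros H; simpl; [reflexivity|].
  rewrite IHn by (intros; apply H; lia). rewrite H by lia; reflexivity. Qed.

Lemma sumN_add f a b : sumN f (a+b) = sumN f a + sumN (fun t => f (a+t)%nat) b.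
Proof. induction b; simpl.
  - rewrite Nat.add_0_r; ring.
  - rewrite Nat.add_succ_r; simpl; rewrite IHb; ring. Qed.

Lemma sumN_scal c f n : sumN (fun k => c * f k) n = c * sumN f n.
Proof. induction n; simpl; [ring| rewrite IHn; ring]. Qed.

Lemma sumN_div c f n : sumN (fun k => f k / c) n = sumN f n / c.
Proof. induction n; simpl; [unfold Rdiv; ring| rewrite IHn; unfold Rdiv; ring]. Qed.

Lemma sumN_le f g n : (forall k, (k<n)%nat -> f k <= g k) -> sumN f n <= sumN g n.
Proof. induction n; intros H; simpl; [lra|].
  assert (sumN f n <= sumN g n) by (apply IHn; intros; apply H; lia).
  assert (f n <= g n) by (apply H; lia). lra. Qed.

Lemma sumN_plus f g n : sumN (fun k => f k + g k) n = sumN f n + sumN g n.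
Proof. induction n; simpl; [ring| rewrite IHn; ring]. Qed.

Lemma sumN_minus f g n : sumN (fun k => f k - g k) n = sumN f n - sumN g n.
Proof. induction n; simpl; [ring| rewrite IHn; ring]. Qed.

Lemma sumN_abs f n : Rabs (sumN f n) <= sumN (fun k => Rabs (f k)) n.
Proof. induction n; simpl.
  - rewrite Rabs_R0; lra.
  - eapply Rle_trans; [apply Rabs_triang|]. lra. Qed.

Lemma sumN_const c n : sumN (fun _ => c) n = INR n * c.
Proof. induction n; simpl sumN; [simpl; ring|]. rewrite IHn, S_INR; ring. Qed.

Lemma sumN_nonneg f n : (forall k, (k<n)%nat -> 0 <= f k) -> 0 <= sumN f n.
Proof. intros H. replace 0 with (sumN (fun _ => 0) n).
  - apply sumN_le; auto.
  - rewrite sumN_const; ring. Qed.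

Lemma sumN_block g q m : (0 < q)%nat ->
  sumN (fun w => g (w / q)%nat) (m * q) = INR q * sumN g m.
Proof. intros Hq. induction m.
  - simpl sumN. ring.
  - rewrite Nat.mul_succ_l, sumN_add, IHm. simpl sumN.
    rewrite (sumN_ext (fun t => g ((m * q + t) / q)%nat) (fun _ => g m)).
    + rewrite sumN_const; ring.
    + intros k Hk. rewrite Nat.div_add_l by lia. rewrite Nat.div_small by lia.
      now rewrite Nat.add_0_r. Qed.

Lemma sumN_ind_le q c n : (0 < q)%nat ->
  sumN (fun w => if Nat.eqb (w / q) c then 1 else 0) n <= INR q.
Proof. intros Hq.
  set (m := S (n / q)).
  assert (Hn : (n <= m * q)%nat).
  { unfold m. pose proof (Nat.div_mod_eq n q). pose proof (Nat.mod_upper_bound n q).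
    nia. }
  apply Rle_trans with (sumN (fun w => if Nat.eqb (w / q) c then 1 else 0) (m*q)).
  - replace (m*q)%nat with (n + (m*q - n))%nat by lia. rewrite sumN_add.
    assert (0 <= sumN (fun t => if Nat.eqb ((n+t)/q) c then 1 else 0) (m*q-n)).
    { apply sumN_nonneg. intros; destruct Nat.eqb; lra. } lra.
  - rewrite (sumN_block (fun k => if Nat.eqb k c then 1 else 0)) by lia.
    assert (sumN (fun k => if Nat.eqb k c then 1 else 0) m <= 1).
    { clear. assert (forall x, sumN (fun k => if Nat.eqb k c then 1 else 0) x
         = if Nat.leb x c then 0 else 1).
      { intro x. induction x as [|y IHy]; simpl sumN; [simpl; reflexivity|]. rewrite IHy.
        destruct (Nat.leb y c) eqn:E1; destruct (Nat.leb (S y) c) eqn:E2;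
        destruct (Nat.eqb y c) eqn:E3;
        apply Nat.leb_le in E1 || apply Nat.leb_gt in E1;
        apply Nat.leb_le in E2 || apply Nat.leb_gt in E2;
        apply Nat.eqb_eq in E3 || apply Nat.eqb_neq in E3; try lia; try ring. }
      rewrite H. destruct Nat.leb; lra. }
    pose proof (pos_INR q). nra. Qed.

Lemma D_fuel_stable p : forall n f g i j, (f <= n)%nat -> (g <= n)%nat ->
  (i+j <= f)%nat -> (i+j <= g)%nat -> D_fuel f p i j = D_fuel g p i j.
Proof.
  induction n; intros f g i j Hf Hg Hif Hig.
  - assert (f = 0%nat) by lia. assert (g = 0%nat) by lia. subst. reflexivity.
  - destruct f as [|f]; destruct g as [|g].
    + reflexivity.
    + assert (i = 0%nat) by lia. assert (j = 0%nat) by lia. subst. reflexivity.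
    + assert (i = 0%nat) by lia. assert (j = 0%nat) by lia. subst. reflexivity.
    + simpl. destruct (Nat.eqb i j); [reflexivity|].
      rewrite (sum_1_to_ext (fun k => D_fuel f p i k) (fun k => D_fuel g p i k)).
      rewrite (sum_1_to_ext (fun k => D_fuel f p j k) (fun k => D_fuel g p j k)).
      reflexivity.
      all: intros k Hk; apply IHn; lia. Qed.

Lemma Dnode_diag p i : Dnode p i i = 0.
Proof. unfold Dnode. destruct (i+i)%nat eqn:E; simpl; [reflexivity|].
  rewrite Nat.eqb_refl. reflexivity. Qed.

Lemma Dnode_off p i j : i <> j -> Dnode p i j = p * Snode p i j * Snode p j i.
Proof. intro H. unfold Dnode, Snode. destruct (i+j)%nat eqn:E. lia.
  simpl. apply Nat.eqb_neq in H; rewrite H.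
  rewrite (sum_1_to_ext (fun k => D_fuel n p i k) (fun k => D_fuel (i+k) p i k)).
  rewrite (sum_1_to_ext (fun k => D_fuel n p j k) (fun k => D_fuel (j+k) p j k)).
  reflexivity.
  all: intros k Hk; apply D_fuel_stable with (n := n); lia. Qed.

Lemma Snode_succ p i j : (1 <= j)%nat -> Snode p i (S j) = Snode p i j - Dnode p i j.
Proof. intros. unfold Snode. replace (S j - 1)%nat with (S (j-1)) by lia.
  simpl sum_1_to. replace (S (j-1)) with j by lia. ring. Qed.

Lemma Snode_bounds p : 0 <= p <= 1 -> forall n i j, (i + j <= n)%nat -> 0 <= Snode p i j <= 1.
Proof. intros Hp n. induction n; intros i j H; destruct j as [|[|j]].
  all: try (unfold Snode; simpl; lra).
  - lia.
  - rewrite Snode_succ by lia.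
    destruct (Nat.eq_dec i (S j)) as [E|E].
    + subst. rewrite Dnode_diag. pose proof (IHn (S j) (S j) ltac:(lia)). lra.
    + rewrite Dnode_off by auto.
      pose proof (IHn i (S j) ltac:(lia)). pose proof (IHn (S j) i ltac:(lia)).
      set (x := Snode p i (S j)) in *. set (y := Snode p (S j) i) in *.
      assert (0 <= p*y <= 1) by nra.
      replace (x - p*x*y) with (x*(1-p*y)) by ring. nra. Qed.

Lemma Snode_bd p i j : 0 <= p <= 1 -> 0 <= Snode p i j <= 1.
Proof. intros Hp; apply (Snode_bounds p Hp (i+j)); lia. Qed.

Definition sig (d : R) (M q u v : nat) : R := Snode (d / INR M) (u/q + 1) (v/q + 1).
Definition Tg (d : R) (M q u w : nat) : R :=
  Dnode (d / INR M) (u/q + 1) (w/q + 1) / (d / INR M).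

Lemma grid_eq d M q u v : 0 < d -> (0 < M)%nat -> (0 < q)%nat ->
  sig d M q u v = 1 - d / INR (M*q) * sumN (Tg d M q u) (q * (v/q)).
Proof. intros Hd HM Hq. unfold sig, Snode.
  replace (v/q+1-1)%nat with (v/q)%nat by lia. rewrite sum_1_to_sumN.
  rewrite (Nat.mul_comm q (v/q)).
  rewrite (sumN_ext (Tg d M q u) (fun w => (fun k => Dnode (d / INR M) (u/q+1) (S k) / (d/INR M)) (w/q)%nat)).
  2:{ intros k _. unfold Tg. now rewrite !Nat.add_1_r. }
  rewrite (sumN_block (fun k => Dnode (d / INR M) (u/q+1) (S k) / (d/INR M)) q (v/q)) by lia.
  rewrite sumN_div.
  assert (0 < INR M) by (apply lt_0_INR; lia).
  assert (0 < INR q) by (apply lt_0_INR; lia).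
  rewrite mult_INR. field. split; lra. Qed.

Lemma Tg_diag d M q u w : (w/q = u/q)%nat -> Tg d M q u w = 0.
Proof. intros E. unfold Tg. rewrite E, Dnode_diag. unfold Rdiv; ring. Qed.

Lemma Tg_off d M q u w : 0 < d -> (0 < M)%nat -> (w/q <> u/q)%nat ->
  Tg d M q u w = sig d M q u w * sig d M q w u.
Proof. intros Hd HM E. unfold Tg, sig. rewrite Dnode_off by lia.
  assert (0 < INR M) by (apply lt_0_INR; lia).
  field. split; [lra|]. intro; assert (0 < d / INR M) by (apply Rdiv_lt_0_compat; lra). lra. Qed.

Lemma sig_bd d M q u v : 0 <= d / INR M <= 1 -> 0 <= sig d M q u v <= 1.
Proof. intros; unfold sig; apply Snode_bd; auto. Qed.

Lemma Tg_bd d M q u w : 0 < d -> (0 < M)%nat -> 0 <= d / INR M <= 1 -> 0 <= Tg d M q u w <= 1.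
Proof. intros Hd HM Hp. destruct (Nat.eq_dec (w/q) (u/q)) as [E|E].
  - rewrite Tg_diag by auto. lra.
  - rewrite Tg_off by auto. pose proof (sig_bd d M q u w Hp). pose proof (sig_bd d M q w u Hp).
    nra. Qed.

Lemma grid_eq2 d M q u v : 0 < d -> (0 < M)%nat -> (0 < q)%nat -> 0 <= d / INR M <= 1 ->
  exists R, 0 <= R <= INR q /\
  sig d M q u v = 1 - d / INR (M*q) * (sumN (Tg d M q u) v - R).
Proof. intros Hd HM Hq Hp. rewrite grid_eq by auto.
  pose proof (Nat.div_mod_eq v q). pose proof (Nat.mod_upper_bound v q ltac:(lia)).
  set (c := (q * (v/q))%nat) in *.
  exists (sumN (fun t => Tg d M q u (c + t)%nat) (v - c)).
  split.
  - split.
    + apply sumN_nonneg; intros; apply Tg_bd; auto.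
    + apply Rle_trans with (sumN (fun _ => 1) (v - c)).
      * apply sumN_le; intros; apply Tg_bd; auto.
      * rewrite sumN_const. rewrite Rmult_1_r. apply le_INR. lia.
  - assert (E : sumN (Tg d M q u) v = sumN (Tg d M q u) c + sumN (fun t => Tg d M q u (c + t)%nat) (v - c)).
    { rewrite <- sumN_add. f_equal. lia. }
    rewrite E. ring. Qed.

Lemma prod_diff x1 y1 x2 y2 : 0 <= x1 <= 1 -> 0 <= y1 <= 1 -> 0 <= x2 <= 1 -> 0 <= y2 <= 1 ->
  Rabs (x1*y1 - x2*y2) <= Rabs (x1-x2) + Rabs (y1-y2).
Proof. intros.
  replace (x1*y1 - x2*y2) with ((x1-x2)*y1 + x2*(y1-y2)) by ring.
  eapply Rle_trans; [apply Rabs_triang|]. rewrite !Rabs_mult.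
  rewrite (Rabs_right y1) by lra. rewrite (Rabs_right x2) by lra.
  pose proof (Rabs_pos (x1-x2)). pose proof (Rabs_pos (y1-y2)). nra. Qed.

Definition ee d M1 q1 M2 q2 u v := Rabs (sig d M1 q1 u v - sig d M2 q2 u v).

Lemma recur d M1 q1 M2 q2 L u v : 0 < d -> (0 < M1)%nat -> (0 < q1)%nat ->
  (0 < M2)%nat -> (0 < q2)%nat -> (M1 * q1 = L)%nat -> (M2 * q2 = L)%nat ->
  0 <= d / INR M1 <= 1 -> 0 <= d / INR M2 <= 1 ->
  ee d M1 q1 M2 q2 u v <= d / INR L * sumN (fun w => ee d M1 q1 M2 q2 u w + ee d M1 q1 M2 q2 w u) v
     + d / INR L * (2 * (INR q1 + INR q2)).
Proof. intros Hd HM1 Hq1 HM2 Hq2 HL1 HL2 Hp1 Hp2.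
  destruct (grid_eq2 d M1 q1 u v Hd HM1 Hq1 Hp1) as [R1 [HR1 E1]].
  destruct (grid_eq2 d M2 q2 u v Hd HM2 Hq2 Hp2) as [R2 [HR2 E2]].
  rewrite HL1 in E1. rewrite HL2 in E2.
  unfold ee at 1. rewrite E1, E2.
  set (k := d / INR L).
  assert (Hk : 0 <= k).
  { unfold k. assert (0 < INR L) by (apply lt_0_INR; lia).
    apply Rlt_le, Rdiv_lt_0_compat; lra. }
  replace (1 - k * (sumN (Tg d M1 q1 u) v - R1) - (1 - k * (sumN (Tg d M2 q2 u) v - R2)))
    with (k * (sumN (fun w => Tg d M2 q2 u w - Tg d M1 q1 u w) v + (R1 - R2)))
    by (rewrite sumN_minus; ring).
  rewrite Rabs_mult, (Rabs_right k) by lra.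
  rewrite <- Rmult_plus_distr_l. apply Rmult_le_compat_l; auto.
  set (ind := fun q w => if Nat.eqb (w/q) (u/q) then 1 else 0).
  assert (Hpt : forall w, Rabs (Tg d M2 q2 u w - Tg d M1 q1 u w) <=
     (ee d M1 q1 M2 q2 u w + ee d M1 q1 M2 q2 w u) + (ind q1 w + ind q2 w)).
  { intro w. unfold ind, ee.
    pose proof (Rabs_pos (sig d M1 q1 u w - sig d M2 q2 u w)).
    pose proof (Rabs_pos (sig d M1 q1 w u - sig d M2 q2 w u)).
    pose proof (Tg_bd d M1 q1 u w Hd HM1 Hp1). pose proof (Tg_bd d M2 q2 u w Hd HM2 Hp2).
    destruct (Nat.eqb (w/q1) (u/q1)) eqn:Ea; destruct (Nat.eqb (w/q2) (u/q2)) eqn:Eb.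
    1-3: apply Rabs_le; lra.
    apply Nat.eqb_neq in Ea, Eb.
    rewrite !Tg_off by auto.
    rewrite Rabs_minus_sym.
    pose proof (prod_diff (sig d M1 q1 u w) (sig d M1 q1 w u) (sig d M2 q2 u w) (sig d M2 q2 w u)
      (sig_bd _ _ _ _ _ Hp1) (sig_bd _ _ _ _ _ Hp1) (sig_bd _ _ _ _ _ Hp2) (sig_bd _ _ _ _ _ Hp2)).
    lra. }
  eapply Rle_trans; [apply Rabs_triang|].
  assert (Rabs (R1 - R2) <= INR q1 + INR q2) by (apply Rabs_le; lra).
  assert (sumN (fun w => Rabs (Tg d M2 q2 u w - Tg d M1 q1 u w)) v <=
     sumN (fun w => ee d M1 q1 M2 q2 u w + ee d M1 q1 M2 q2 w u) v + (INR q1 + INR q2)).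
  { eapply Rle_trans. apply sumN_le. intros w _. apply Hpt.
    rewrite (sumN_plus (fun w => ee d M1 q1 M2 q2 u w + ee d M1 q1 M2 q2 w u) (fun w => ind q1 w + ind q2 w)).
    rewrite (sumN_plus (ind q1) (ind q2)).
    pose proof (sumN_ind_le q1 (u/q1) v Hq1). pose proof (sumN_ind_le q2 (u/q2) v Hq2).
    unfold ind. lra. }
  pose proof (sumN_abs (fun w => Tg d M2 q2 u w - Tg d M1 q1 u w) v).
  lra. Qed.

Lemma exp_ge1p x : 1 + x <= exp x.
Proof. destruct (Req_dec x 0) as [E|E].
  - subst. rewrite exp_0. lra.
  - left. apply exp_ineq1; auto. Qed.

Lemma geom a v : 0 <= a -> a * sumN (fun w => exp (a * INR w)) v <= exp (a * INR v) - 1.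
Proof. intros Ha. induction v.
  - simpl. rewrite Rmult_0_r, exp_0. lra.
  - simpl sumN. rewrite S_INR.
    replace (a * (INR v + 1)) with (a * INR v + a) by ring. rewrite exp_plus.
    pose proof (exp_ge1p a). pose proof (exp_pos (a * INR v)). nra. Qed.

Lemma gron_step d M1 q1 M2 q2 L N u v : 0 < d -> (0 < M1)%nat -> (0 < q1)%nat ->
  (0 < M2)%nat -> (0 < q2)%nat -> (M1 * q1 = L)%nat -> (M2 * q2 = L)%nat ->
  0 <= d / INR M1 <= 1 -> 0 <= d / INR M2 <= 1 -> (0 < N)%nat -> (N <= M1)%nat -> (N <= M2)%nat ->
  (forall w, (w < v)%nat ->
     ee d M1 q1 M2 q2 u w <= 8 * d / INR N * exp (4 * d / INR L * INR (u + w)) /\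
     ee d M1 q1 M2 q2 w u <= 8 * d / INR N * exp (4 * d / INR L * INR (u + w))) ->
  ee d M1 q1 M2 q2 u v <= 8 * d / INR N * exp (4 * d / INR L * INR (u + v)).
Proof. intros Hd HM1 Hq1 HM2 Hq2 HL1 HL2 Hp1 Hp2 HN HN1 HN2 IH.
  pose proof (recur d M1 q1 M2 q2 L u v Hd HM1 Hq1 HM2 Hq2 HL1 HL2 Hp1 Hp2) as Hr.
  assert (HLp : 0 < INR L) by (apply lt_0_INR; nia).
  assert (HNp : 0 < INR N) by (apply lt_0_INR; lia).
  set (K := 8 * d / INR N). set (a := 4 * d / INR L).
  assert (HK : 0 <= K) by (unfold K; apply Rlt_le, Rdiv_lt_0_compat; lra).
  assert (Ha : 0 <= a) by (unfold a; apply Rlt_le, Rdiv_lt_0_compat; lra).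
  assert (Hc : d / INR L * (2 * (INR q1 + INR q2)) <= K / 2).
  { assert (H1 : INR q1 * INR N <= INR L).
    { rewrite <- mult_INR. apply le_INR. nia. }
    assert (H2 : INR q2 * INR N <= INR L).
    { rewrite <- mult_INR. apply le_INR. nia. }
    unfold K. apply (Rmult_le_reg_r (INR L * INR N)). nra.
    replace (d / INR L * (2 * (INR q1 + INR q2)) * (INR L * INR N))
      with (2 * d * (INR q1 * INR N + INR q2 * INR N)) by (field; lra).
    replace (8 * d / INR N / 2 * (INR L * INR N)) with (4 * d * INR L) by (field; lra).
    nra. }
  assert (Hs : sumN (fun w => ee d M1 q1 M2 q2 u w + ee d M1 q1 M2 q2 w u) v <=
               2 * K * exp (a * INR u) * sumN (fun w => exp (a * INR w)) v).
  { rewrite <- (sumN_scal (2 * K * exp (a * INR u)) (fun w => exp (a * INR w))).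
    apply sumN_le. intros w Hw. destruct (IH w Hw) as [I1 I2].
    rewrite plus_INR, Rmult_plus_distr_l, exp_plus in I1, I2.
    replace (2 * K * exp (a * INR u) * exp (a * INR w)) with
      (K * (exp (a * INR u) * exp (a * INR w)) + K * (exp (a * INR u) * exp (a * INR w))) by ring.
    change (8 * d / INR N) with K in I1, I2. change (4 * d / INR L) with a in I1, I2. lra. }
  pose proof (geom a v Ha) as Hg.
  assert (Hk : d / INR L = a / 4) by (unfold a; field; lra).
  rewrite Hk in Hr.
  assert (He : exp (a * INR (u + v)) = exp (a * INR u) * exp (a * INR v))
    by (rewrite plus_INR, Rmult_plus_distr_l, exp_plus; reflexivity).
  rewrite He.
  pose proof (exp_pos (a * INR u)). pose proof (exp_pos (a * INR v)).
  assert (1 <= exp (a * INR u)).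
  { pose proof (exp_ge1p (a * INR u)). pose proof (pos_INR u). nra. }
  assert (a / 4 * sumN (fun w => ee d M1 q1 M2 q2 u w + ee d M1 q1 M2 q2 w u) v <=
          a / 4 * (2 * K * exp (a * INR u) * sumN (fun w => exp (a * INR w)) v)).
  { apply Rmult_le_compat_l; [lra|exact Hs]. }
  assert (a / 4 * (2 * K * exp (a * INR u) * sumN (fun w => exp (a * INR w)) v)
          = K / 2 * exp (a * INR u) * (a * sumN (fun w => exp (a * INR w)) v)) by (field).
  assert (K / 2 * exp (a * INR u) * (a * sumN (fun w => exp (a * INR w)) v) <=
          K / 2 * exp (a * INR u) * (exp (a * INR v) - 1)).
  { apply Rmult_le_compat_l; [nra|exact Hg]. }
  rewrite Hk in Hc.
  assert (K <= K * exp (a * INR u)) by nra.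
  assert (0 <= K * (exp (a * INR u) * exp (a * INR v))).
  { apply Rmult_le_pos; [lra|]. apply Rmult_le_pos; lra. }
  assert (K / 2 * exp (a * INR u) * (exp (a * INR v) - 1) =
     K / 2 * (exp (a * INR u) * exp (a * INR v)) - (K * exp (a * INR u)) / 2) by field.
  lra. Qed.

Lemma gronwall d M1 q1 M2 q2 L N : 0 < d -> (0 < M1)%nat -> (0 < q1)%nat ->
  (0 < M2)%nat -> (0 < q2)%nat -> (M1 * q1 = L)%nat -> (M2 * q2 = L)%nat ->
  0 <= d / INR M1 <= 1 -> 0 <= d / INR M2 <= 1 -> (0 < N)%nat -> (N <= M1)%nat -> (N <= M2)%nat ->
  forall n u v, (u + v <= n)%nat ->
  ee d M1 q1 M2 q2 u v <= 8 * d / INR N * exp (4 * d / INR L * INR (u + v)).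
Proof. intros Hd HM1 Hq1 HM2 Hq2 HL1 HL2 Hp1 Hp2 HN HN1 HN2 n.
  induction n; intros u v H; eapply gron_step; eauto; intros w Hw.
  - lia.
  - split.
    + apply IHn. lia.
    + rewrite Nat.add_comm. apply IHn. lia. Qed.

Lemma Int_part_unique z x : IZR z <= x < IZR z + 1 -> Int_part x = z.
Proof. intros [H1 H2]. destruct (base_Int_part x) as [B1 B2].
  assert (A1 : (z < Int_part x + 1)%Z).
  { apply lt_IZR. rewrite plus_IZR. simpl. lra. }
  assert (A2 : (Int_part x < z + 1)%Z).
  { apply lt_IZR. rewrite plus_IZR. simpl. lra. }
  lia. Qed.

Definition U (L : nat) (x : R) : nat := Z.to_nat (floorZ (INR L * x)).

Lemma floor_nonneg x : 0 <= x -> (0 <= floorZ x)%Z.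
Proof. intros Hx. unfold floorZ. destruct (base_Int_part x) as [B1 B2].
  assert ((-1 < Int_part x)%Z) by (apply lt_IZR; simpl; lra). lia. Qed.

Lemma U_prop L x : 0 <= INR L * x -> INR (U L x) <= INR L * x < INR (U L x) + 1.
Proof. intros H. unfold U. rewrite INR_IZR_INZ, Z2Nat.id by (apply floor_nonneg; auto).
  unfold floorZ. destruct (base_Int_part (INR L * x)). lra. Qed.

Lemma floor_div M q x : (0 < M)%nat -> (0 < q)%nat -> 0 <= x ->
  floorZ (INR M * x) = Z.of_nat (U (M*q) x / q).
Proof. intros HM Hq Hx.
  assert (HMp : 0 < INR M) by (apply lt_0_INR; lia).
  assert (Hqp : 0 < INR q) by (apply lt_0_INR; lia).
  pose proof (U_prop (M*q) x) as HU. rewrite mult_INR in HU.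
  specialize (HU ltac:(apply Rmult_le_pos; [nra|lra])).
  set (u := U (M*q) x) in *.
  pose proof (Nat.div_mod_eq u q). pose proof (Nat.mod_upper_bound u q ltac:(lia)).
  set (k := (u / q)%nat) in *.
  assert (Hk1 : INR k * INR q <= INR u) by (rewrite <- mult_INR; apply le_INR; nia).
  assert (Hk2 : INR u + 1 <= (INR k + 1) * INR q).
  { rewrite <- S_INR, <- S_INR, <- mult_INR. apply le_INR. nia. }
  unfold floorZ. apply Int_part_unique. rewrite <- INR_IZR_INZ. split.
  - apply (Rmult_le_reg_r (INR q)); auto. nra.
  - apply (Rmult_lt_reg_r (INR q)); auto. nra. Qed.

Lemma iM_eq M q x : (0 < M)%nat -> (0 < q)%nat -> 0 <= x ->
  iM M x = (U (M*q) x / q + 1)%nat.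
Proof. intros. unfold iM. rewrite (floor_div M q) by auto. now rewrite Nat2Z.id. Qed.

Lemma Dscaled_grid d M q x y : 0 < d -> (0 < M)%nat -> (0 < q)%nat -> 0 <= x -> 0 <= y ->
  Dscaled d M x y = d * sig d M q (U (M*q) x) (U (M*q) y) * sig d M q (U (M*q) y) (U (M*q) x).
Proof. intros Hd HM Hq Hx Hy.
  assert (HMp : 0 < INR M) by (apply lt_0_INR; lia).
  unfold Dscaled, sig. rewrite (iM_eq M q x), (iM_eq M q y) by auto.
  rewrite (floor_div M q x), (floor_div M q y) by auto.
  destruct (Z.eq_dec _ _) as [E|E].
  - apply Nat2Z.inj in E. rewrite E. field. lra.
  - rewrite Dnode_off.
    + field. lra.
    + intro F. apply E. f_equal. lia. Qed.

Lemma exp_mono x y : x <= y -> exp x <= exp y.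
Proof. intros [H|H]; [left; apply exp_increasing; auto| subst; lra]. Qed.

Theorem mainTheorem2 :
  forall (d : R), 0 < d ->
  forall (N : nat), d < INR N ->
  forall (N1 N2 : nat), (N <= N1)%nat -> (N <= N2)%nat ->
  forall (alpha beta : R),
    0 <= alpha < 1 -> 0 <= beta < 1 ->
    Rabs (Dscaled d N1 alpha beta - Dscaled d N2 alpha beta)
      <= 16 * d ^ 2 / INR N * exp (8 * d).
Proof.
  intros d Hd N HN N1 N2 H1 H2 al be Hal Hbe.
  assert (HN0 : (0 < N)%nat).
  { destruct N; [simpl in HN; lra| lia]. }
  assert (HNp : 0 < INR N) by lra.
  assert (HN1 : INR N <= INR N1) by (apply le_INR; auto).
  assert (HN2 : INR N <= INR N2) by (apply le_INR; auto).
  assert (Hp1 : 0 <= d / INR N1 <= 1).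
  { split. apply Rlt_le, Rdiv_lt_0_compat; lra.
    apply (Rmult_le_reg_r (INR N1)); [lra|]. field_simplify; lra. }
  assert (Hp2 : 0 <= d / INR N2 <= 1).
  { split. apply Rlt_le, Rdiv_lt_0_compat; lra.
    apply (Rmult_le_reg_r (INR N2)); [lra|]. field_simplify; lra. }
  set (L := (N1 * N2)%nat).
  assert (HLp : 0 < INR L) by (unfold L; rewrite mult_INR; nra).
  rewrite (Dscaled_grid d N1 N2) by (auto; lia || lra).
  rewrite (Dscaled_grid d N2 N1) by (auto; lia || lra).
  rewrite (Nat.mul_comm N2 N1). fold L.
  set (u := U L al). set (v := U L be).
  assert (Hu : INR u <= INR L).
  { pose proof (U_prop L al ltac:(nra)). fold u in H. nra. }
  assert (Hv : INR v <= INR L).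
  { pose proof (U_prop L be ltac:(nra)). fold v in H. nra. }
  pose proof (gronwall d N1 N2 N2 N1 L N Hd ltac:(lia) ltac:(lia) ltac:(lia) ltac:(lia)
     eq_refl ltac:(unfold L; lia) Hp1 Hp2 HN0 H1 H2) as G.
  pose proof (G (u+v)%nat u v ltac:(lia)) as Ga.
  pose proof (G (u+v)%nat v u ltac:(lia)) as Gb.
  rewrite Nat.add_comm in Gb.
  assert (Hexp : exp (4 * d / INR L * INR (u + v)) <= exp (8 * d)).
  { apply exp_mono. rewrite plus_INR.
    apply (Rmult_le_reg_r (INR L)); [lra|].
    replace (4 * d / INR L * (INR u + INR v) * INR L) with (4 * d * (INR u + INR v)) by (field; lra).
    nra. }
  unfold ee in Ga, Gb.
  replace (d * sig d N1 N2 u v * sig d N1 N2 v u - d * sig d N2 N1 u v * sig d N2 N1 v u)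
    with (d * (sig d N1 N2 u v * sig d N1 N2 v u - sig d N2 N1 u v * sig d N2 N1 v u)) by ring.
  rewrite Rabs_mult, (Rabs_right d) by lra.
  pose proof (prod_diff (sig d N1 N2 u v) (sig d N1 N2 v u) (sig d N2 N1 u v) (sig d N2 N1 v u)
      (sig_bd _ _ _ _ _ Hp1) (sig_bd _ _ _ _ _ Hp1) (sig_bd _ _ _ _ _ Hp2) (sig_bd _ _ _ _ _ Hp2)) as P.
  assert (HK : 0 <= 8 * d / INR N) by (apply Rlt_le, Rdiv_lt_0_compat; lra).
  assert (Rabs (sig d N1 N2 u v * sig d N1 N2 v u - sig d N2 N1 u v * sig d N2 N1 v u)
          <= 2 * (8 * d / INR N) * exp (8 * d)).
  { assert (8 * d / INR N * exp (4 * d / INR L * INR (u + v)) <= 8 * d / INR N * exp (8 * d))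
      by (apply Rmult_le_compat_l; auto). lra. }
  replace (16 * d ^ 2 / INR N * exp (8 * d)) with (d * (2 * (8 * d / INR N) * exp (8 * d)))
    by (field; lra).
  apply Rmult_le_compat_l; lra.
Qed.
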